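(* Let $\mathbf d=(d_1,\ldots,d_n)$ be a degree sequence and $v\in[n]$ such that $\mathbb P(\mathfrak t_n(v)>0)>0$ (equivalently, $d_w>1$ for some $w\ne v$). Then for every $k\ge2$ with $\mathbb P(\mathfrak s_n(v)=k,\mathfrak t_n(v)>0)>0$, \[\mathbb P\big(\mathfrak t_n(v)=j\,\big|\,\mathfrak s_n(v)=k,\ \mathfrak t_n(v)>0\big)=\frac{1}{k-1},\qquad j\in[k-1].\]
   Context: A degree sequence is $\mathbf d=(d_1,\ldots,d_n)\in\mathbb N_0^n$ with $\sum_j d_j=n$. Let $\mathfrak F(\mathbf d)=\{f:[n]\to[n]: |f^{-1}(\{i\})|=d_i\ \forall i\}$ and $F$ uniform on $\mathfrak F(\mathbf d)$. For $f:V\to V$, $v\in V$: six-length $\mathfrak s_f(v)=\min\{k\in\mathbb N: f^{(k)}(v)\in\{f^{(j)}(v):0\le j\le k-1\}\}$ ($f^{(k)}$ the $k$-fold composition, $f^{(0)}=\mathrm{id}$); tail-length $\mathfrak t_f(v)$ is the unique integer with $0\le\mathfrak t_f(v)<\mathfrak s_f(v)$ and $f^{(\mathfrak s_f(v))}(v)=f^{(\mathfrak t_f(v))}(v)$. $\mathfrak s_n(v)=\mathfrak s_F(v)$, $\mathfrak t_n(v)=\mathfrak t_F(v)$. *)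

(* Defs.v *)
From mathcomp Require Import all_boot all_order all_algebra.
Set Implicit Arguments. Unset Strict Implicit. Unset Printing Implicit Defensive.
Import GRing.Theory Num.Theory.

Definition six_pred (T : finType) (f : T -> T) (v : T) : pred nat :=
  fun k => (0 < k) && (iter k f v \in [seq iter j f v | j <- iota 0 k]).

Lemma six_pred_ex (T : finType) (f : T -> T) (v : T) : exists k, six_pred f v k.
Proof.
exists (order f v); rewrite /six_pred order_gt0 /=.
have := looping_order f v; rewrite /looping.
suff -> : forall m x, traject f x m = [seq iter j f x | j <- iota 0 m] by [].
move=> m0 x0; elim: m0 x0 => [|m IH] x //=.
rewrite IH -(addn0 1) iotaDl -map_comp; congr (_ :: _); apply: eq_map => j /=.
by rewrite -iterSr.
Qed.

Definition sixlen (T : finType) (f : T -> T) (v : T) : nat := ex_minn (six_pred_ex f v).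

Definition taillen (T : finType) (f : T -> T) (v : T) : nat :=
  index (iter (sixlen f v) f v) [seq iter j f v | j <- iota 0 (sixlen f v)].

(* the set F(d) of maps [n] -> [n] with in-degree sequence d *)
Definition Fd (n : nat) (d : 'I_n -> nat) : {set {ffun 'I_n -> 'I_n}} :=
  [set f : {ffun 'I_n -> 'I_n} | [forall i, #|[set x | f x == i]| == d i]].

Definition prob (n : nat) (d : 'I_n -> nat) (E : pred {ffun 'I_n -> 'I_n}) : rat :=
  (#|[set f in Fd d | E f]|%:R / #|Fd d|%:R)%R.

Definition condprob (n : nat) (d : 'I_n -> nat) (A B : pred {ffun 'I_n -> 'I_n}) : rat :=
  (prob d (fun f => A f && B f) / prob d B)%R.

(* Main.v *)
Require Import Defs.
From mathcomp Require Import all_boot all_order all_algebra.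
From mathcomp Require Import all_fingroup zify ring.
Import GRing.Theory Num.Theory.
Set Implicit Arguments. Unset Strict Implicit.

Lemma map_iota_inj (T : eqType) (g : nat -> T) k i j :
  uniq [seq g i | i <- iota 0 k] -> i < k -> j < k -> g i = g j -> i = j.
Proof.
move=> U ik jk E.
have := @nth_uniq _ (g 0) [seq g i | i <- iota 0 k] i j; rewrite size_map size_iota => /(_ ik jk U).
by rewrite !(nth_map 0) ?size_iota // !nth_iota // !add0n E eqxx => /esym/eqP.
Qed.

Lemma sixlen_spec (T : finType) (f : T -> T) v :
  [/\ 0 < sixlen f v, uniq [seq iter i f v | i <- iota 0 (sixlen f v)],
      taillen f v < sixlen f v & iter (sixlen f v) f v = iter (taillen f v) f v].
Proof.
rewrite /taillen /sixlen; case: ex_minnP => k /andP[k0 Hin] Hmin.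
have U : uniq [seq iter i f v | i <- iota 0 k].
  rewrite map_inj_in_uniq ?iota_uniq // => i j; rewrite !mem_iota !add0n /= => ik jk E.
  wlog lt_ij : i j ik jk E / i < j.
    move=> W; case: (ltngtP i j) => [h|h|//]; first exact: W.
    by apply/esym; apply: W.
  have : six_pred f v j.
    rewrite /six_pred (leq_ltn_trans _ lt_ij) //= -E; apply: map_f.
    by rewrite mem_iota.
  by move/Hmin; rewrite leqNgt jk.
have Hs : size [seq iter i f v | i <- iota 0 k] = k by rewrite size_map size_iota.
split => //; first by rewrite -[X in _ < X]Hs index_mem.
rewrite -{1}(nth_index v Hin) (nth_map 0) ?nth_iota ?add0n //.
  by rewrite -[X in _ < X]Hs index_mem.
by rewrite size_iota -[X in _ < X]Hs index_mem.
Qed.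

Lemma sixlen_char (T : finType) (f : T -> T) v k t :
  t < k -> uniq [seq iter i f v | i <- iota 0 k] -> iter k f v = iter t f v ->
  sixlen f v = k /\ taillen f v = t.
Proof.
move=> tk U E.
have Hs : size [seq iter i f v | i <- iota 0 k] = k by rewrite size_map size_iota.
have Hk : sixlen f v = k.
  have Pk : six_pred f v k.
    rewrite /six_pred (leq_ltn_trans _ tk) //= E; apply: map_f; by rewrite mem_iota.
  rewrite /sixlen; case: ex_minnP => m /andP[m0 Hin] Hmin.
  have mk := Hmin _ Pk.
  case: (ltngtP m k) => [mlt|//|->//]; last by rewrite ltnNge mk.
  move/mapP: Hin => [i]; rewrite mem_iota add0n => /andP[_ im] Ei.
  have := map_iota_inj U (ltn_trans im mlt) mlt (esym Ei). lia.
split => //; rewrite /taillen Hk E.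
have -> : iter t f v = nth v [seq iter i f v | i <- iota 0 k] t.
  by rewrite (nth_map 0) ?size_iota ?nth_iota.
by rewrite index_uniq ?Hs.
Qed.


Definition phi (T : finType) (v : T) (f : {ffun T -> T}) : {ffun T -> T} :=
  [ffun x => f (tperm v (iter (sixlen f v).-1 f v) (tperm v (f v) x))].

Definition rho k i := if i == 0 then 0 else if i == k.-1 then 1 else i.+1.

Lemma phi_traj (T : finType) (v : T) (f : {ffun T -> T}) :
  2 <= sixlen f v -> 0 < taillen f v ->
  (forall i, i < sixlen f v -> iter i (phi v f) v = iter (rho (sixlen f v) i) f v) /\
  iter (sixlen f v) (phi v f) v = iter (taillen f v) f v.
Proof.
case: (sixlen_spec f v) => _ U tk E.
move: U tk E; set k := sixlen f v; set t := taillen f v => U tk E k2 t0.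
have inj i j : i < k -> j < k -> iter i f v = iter j f v -> i = j := map_iota_inj U.
have neq i j : i < k -> j < k -> i != j -> iter i f v != iter j f v.
  by move=> ik jk; apply/contra_neq => /inj; apply.
have phiE y : phi v f y = f (tperm v (iter k.-1 f v) (tperm v (f v) y)) by rewrite ffunE.
have g1 : phi v f (iter 1 f v) = iter t f v.
  rewrite phiE /= tpermR tpermL -E -[in RHS](prednK (ltnW k2)).
  by rewrite iterS.
have gmid i : 1 < i < k.-1 -> phi v f (iter i f v) = iter i.+1 f v.
  move=> /andP[i1 ik]; rewrite phiE.
  have ik' : i < k by lia.
  rewrite (@tpermD _ v (f v)); last by have := neq 1 i; rewrite /=; apply; lia.
    rewrite tpermD ?iterS //; last by apply: neq; lia.
    by have := neq 0 i; rewrite /=; apply; lia.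
  by have := neq 0 i; rewrite /=; apply; lia.
have gend : 2 < k -> phi v f (iter k.-1 f v) = iter 1 f v.
  move=> k3; rewrite phiE (@tpermD _ v (f v) (iter k.-1 f v)) ?tpermR //.
    by have := neq 0 k.-1; rewrite /=; apply; lia.
  by have := neq 1 k.-1; rewrite /=; apply; lia.
have g0 : phi v f v = iter (rho k 1) f v.
  rewrite phiE tpermL /rho /=.
  case: (ltngtP k 2) => [|k3|k2'].
  - lia.
  - have -> : (1 == k.-1) = false by lia.
    rewrite tpermD //.
      by have := neq 0 1; rewrite /=; apply; lia.
    by have := neq k.-1 1; rewrite /=; apply; lia.
  - by rewrite k2' /= tpermR.
have traj : forall i, i < k -> iter i (phi v f) v = iter (rho k i) f v.
  elim=> [|i IH] ik //.
  rewrite iterS IH; last lia.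
  case: (posnP i) => [->|i0]; first exact: g0.
  have h0 : (i == 0) = false by lia.
  have h1 : (i == k.-1) = false by lia.
  rewrite {1}/rho h0 h1.
  case: (eqVneq i.+1 k.-1) => [e|ne].
    rewrite e gend; last lia.
    have h2 : (k.-1 == 0) = false by lia.
    by rewrite /rho h2 eqxx.
  rewrite gmid; last lia.
  have h3 : (i.+1 == k.-1) = false by lia.
  by rewrite /rho h3.
split => //.
rewrite -(prednK (ltnW k2)) iterS traj; last lia.
have h2 : (k.-1 == 0) = false by lia.
by rewrite /rho h2 eqxx g1.
Qed.


Lemma rho_lt k i : 2 <= k -> i < k -> rho k i < k.
Proof. rewrite /rho => k2 ik; case: eqVneq => ?; [lia|]; case: eqVneq => ?; lia. Qed.

Lemma rho_inj k i j : 2 <= k -> i < k -> j < k -> rho k i = rho k j -> i = j.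
Proof.
rewrite /rho => k2 ik jk.
case: (eqVneq i 0) => ?; case: (eqVneq i k.-1) => ?;
case: (eqVneq j 0) => ?; case: (eqVneq j k.-1) => ?; lia.
Qed.

Definition tnext k t := if t == 1 then k.-1 else t.-1.

Lemma phi_props (T : finType) (v : T) (f : {ffun T -> T}) :
  2 <= sixlen f v -> 0 < taillen f v ->
  sixlen (phi v f) v = sixlen f v /\
  taillen (phi v f) v = tnext (sixlen f v) (taillen f v).
Proof.
move=> k2 t0; have [traj E] := phi_traj k2 t0.
case: (sixlen_spec f v) => _ U tk _.
move: traj E U tk k2 t0; set k := sixlen f v; set t := taillen f v => traj E U tk k2 t0.
apply: sixlen_char.
- rewrite /tnext; case: eqVneq => ?; lia.
- have -> : [seq iter i (phi v f) v | i <- iota 0 k] = [seq iter (rho k i) f v | i <- iota 0 k].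
    by apply/eq_in_map => i; rewrite mem_iota add0n => /andP[_ ik]; apply: traj.
  rewrite map_inj_in_uniq ?iota_uniq // => i j; rewrite !mem_iota !add0n.
  move=> /andP[_ ik] /andP[_ jk] e.
  apply: (rho_inj k2 ik jk); apply: (map_iota_inj U _ _ e); exact: rho_lt.
- rewrite E traj; last by rewrite /tnext; case: eqVneq => ?; lia.
  congr (iter _ f v); rewrite /tnext /rho; case: (eqVneq t 1) => ?.
    have -> : (k.-1 == 0) = false by lia. by rewrite eqxx; lia.
  have -> : (t.-1 == 0) = false by lia.
  have -> : (t.-1 == k.-1) = false by lia.
  lia.
Qed.

Lemma phi_inj (T : finType) (v : T) (f1 f2 : {ffun T -> T}) :
  2 <= sixlen f1 v -> 0 < taillen f1 v ->
  sixlen f2 v = sixlen f1 v -> 0 < taillen f2 v ->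
  phi v f1 = phi v f2 -> f1 = f2.
Proof.
move=> k2 t1 e12 t2 H.
have [tr1 _] := phi_traj k2 t1.
have k2' : 2 <= sixlen f2 v by rewrite e12.
have [tr2 _] := phi_traj k2' t2.
move: tr1 tr2; rewrite e12 H; set k := sixlen f1 v => tr1 tr2.
have eb : f1 v = f2 v.
  have kk : k.-1 < k by lia.
  have := tr1 _ kk; have := tr2 _ kk.
  have h2 : (k.-1 == 0) = false by lia.
  by rewrite /rho h2 eqxx /= => -> ->.
have ec : iter k.-1 f1 v = iter k.-1 f2 v.
  case: (eqVneq k 2) => [->|k3]; first by rewrite /= eb.
  have kk : k.-2 < k by lia.
  have := tr1 _ kk; have := tr2 _ kk.
  have h2 : (k.-2 == 0) = false by lia.
  have h3 : (k.-2 == k.-1) = false by lia.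
  have h4 : k.-2.+1 = k.-1 by lia.
  by rewrite /rho h2 h3 h4 => -> ->.
apply/ffunP => x.
have := congr1 (fun g : {ffun T -> T} => g (tperm v (f1 v) (tperm v (iter k.-1 f1 v) x))) H.
rewrite /phi !ffunE e12 -/k -eb -ec !tpermK.
by [].
Qed.

Lemma phi_deg (T : finType) (v : T) (f : {ffun T -> T}) (i : T) :
  #|[set x | phi v f x == i]| = #|[set x | f x == i]|.
Proof.
set h := fun x => tperm v (iter (sixlen f v).-1 f v) (tperm v (f v) x).
have hinj : injective h by apply: inj_comp; apply: perm_inj.
rewrite -[RHS](card_preimset _ hinj); apply: eq_card => x.
by rewrite !inE ffunE.
Qed.


Definition Aset n (d : 'I_n -> nat) (v : 'I_n) k t :=
  [set f in Fd d | (sixlen f v == k) && (taillen f v == t)].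

Lemma A_le n (d : 'I_n -> nat) v k t : 2 <= k -> 1 <= t < k ->
  #|Aset d v k t| <= #|Aset d v k (tnext k t)|.
Proof.
move=> k2 /andP[t1 tk].
rewrite -(@card_in_imset _ _ (phi v) (Aset d v k t)); last first.
  move=> f1 f2; rewrite !inE => /andP[_ /andP[/eqP s1 /eqP e1]] /andP[_ /andP[/eqP s2 /eqP e2]].
  apply: phi_inj; lia.
apply: subset_leq_card; apply/subsetP => g /imsetP[f fA ->].
move: fA; rewrite !inE => /andP[fF /andP[/eqP sk /eqP tt]].
have k2' : 2 <= sixlen f v by lia.
have t0 : 0 < taillen f v by lia.
have [-> ->] := phi_props k2' t0.
rewrite sk tt !eqxx !andbT; apply/forallP => i; rewrite phi_deg.
by move/forallP: fF.
Qed.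

Lemma all_eq (c : nat -> nat) k : 2 <= k ->
  (forall t, 1 <= t < k -> c t <= c (tnext k t)) ->
  forall t, 1 <= t < k -> c t = c 1.
Proof.
move=> k2 H.
have le1 : forall t, 1 <= t < k -> c t <= c 1.
  elim=> [|t IH] // /andP[t1 tk].
  case: (posnP t) => [->//|t0].
  apply: leq_trans (H _ _) _; first lia.
  rewrite /tnext; have -> : (t.+1 == 1) = false by lia.
  by apply: IH; lia.
have le2 : forall m, m < k.-1 -> c k.-1 <= c (k.-1 - m).
  elim=> [|m IH] mk; first by rewrite subn0.
  apply: leq_trans (IH _) _; first lia.
  apply: leq_trans (H _ _) _; first lia.
  rewrite /tnext; have -> : (k.-1 - m == 1) = false by lia.
  by have -> : (k.-1 - m).-1 = k.-1 - m.+1 by lia.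
move=> t tk.
apply/eqP; rewrite eqn_leq le1 //=.
have h1 := H 1; rewrite /tnext eqxx in h1.
apply: leq_trans (h1 _) _; first lia.
have := le2 (k.-1 - t); have -> : k.-1 - (k.-1 - t) = t by lia.
by apply; lia.
Qed.

Lemma sum_ind (x m : nat) : \sum_(1 <= t < m) (x == t : nat) = (1 <= x < m).
Proof.
elim: m => [|m IH]; first by rewrite big_geq //; lia.
case: (posnP m) => [->|m0]; first by rewrite big_geq //; lia.
rewrite big_nat_recr //= IH.
case: (eqVneq x m) => [->|ne]; lia.
Qed.


Theorem lemma3p12 (n : nat) (d : 'I_n -> nat) (v : 'I_n) :
  \sum_(i < n) d i = n ->
  (0 < prob d (fun f => (0 < taillen f v)%N))%R ->
  forall k : nat, 2 <= k ->
  (0 < prob d (fun f => (sixlen f v == k) && (0 < taillen f v)%N))%R ->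
  forall j : nat, 1 <= j <= k.-1 ->
  condprob d (fun f => taillen f v == j)
             (fun f => (sixlen f v == k) && (0 < taillen f v)%N)
  = (1 / (k.-1)%:R)%R.
Proof.
move=> _ _ k k2 HB j /andP[j1 jk].
have cardA : #|[set f in Fd d | (taillen f v == j) && ((sixlen f v == k) && (0 < taillen f v))]|
   = #|Aset d v k j|.
  apply: eq_card => f; rewrite !inE.
  case: (taillen f v =P j) => [->|_] /=; last by rewrite !andbF.
  by rewrite j1 andbT.
have ceq : forall t, 1 <= t < k -> #|Aset d v k t| = #|Aset d v k 1|.
  apply: (all_eq (c := fun t => #|Aset d v k t|)) => // t ht.
  exact: A_le.
have cardB : #|[set f in Fd d | (sixlen f v == k) && (0 < taillen f v)]|
   = k.-1 * #|Aset d v k 1|.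
  transitivity (\sum_(1 <= t < k) #|Aset d v k t|); last first.
    rewrite big_nat_cond (eq_bigr (fun _ => #|Aset d v k 1|)).
      by rewrite -big_nat_cond sum_nat_const_nat subn1.
    by move=> t /andP[ht _]; apply: ceq.
  set B := [set f in Fd d | _].
  transitivity (\sum_(1 <= t < k) \sum_(f in B) (taillen f v == t : nat)).
    rewrite -sum1_card.
    rewrite (exchange_big) /=.
    apply: eq_bigr => f; rewrite inE => /andP[_ /andP[/eqP sk t0]].
    rewrite sum_ind t0 /=.
    by case: (sixlen_spec f v) => _ _ + _; rewrite sk => ->.
  rewrite big_nat_cond [RHS]big_nat_cond.
  apply: eq_bigr => t /andP[/andP[t1 _] _].
  rewrite -sum1_card big_mkcond [RHS]big_mkcond /=.
  apply: eq_bigr => f _; rewrite !inE.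
  case: (taillen f v =P t) => [->|_] /=; last by rewrite !andbF; case: ifP.
  by rewrite t1 andbT.
have Bnz : #|[set f in Fd d | (sixlen f v == k) && (0 < taillen f v)]| != 0.
  by apply/eqP => h0; move: HB; rewrite /prob /= h0 mul0r Order.POrderTheory.ltxx.
have Nnz : #|Fd d| != 0.
  by apply/eqP => h0; move: HB; rewrite /prob /= h0 invr0 mulr0 Order.POrderTheory.ltxx.
move: Bnz; rewrite cardB muln_eq0 negb_or => /andP[k1nz cnz].
rewrite /condprob /prob /= cardA cardB natrM.
rewrite (ceq j); last lia.
field.
by rewrite !pnatr_eq0 Nnz k1nz cnz.
Qed.
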